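(* Let $X$ be a Banach space with two closed linear subspaces $N,N'$, and let $V$ be a linear subspace of $N$ with $n:=\dim V$ a positive integer. Assume $\delta(N,N')<\frac{1}{2^{n-1}n}$. Then for each $\varepsilon\in\big(0,\frac{1}{2^{n-1}n}-\delta(N,N')\big)$ there is a linear subspace $V'$ of $N'$ with $\dim V'=n$ and $$\hat\delta(V,V')\le\frac{2^{n-1}n(\delta(N,N')+\varepsilon)}{1-2^{n-1}n(\delta(N,N')+\varepsilon)}.$$
   Context: For linear subspaces $A,B$: $\delta(A,B):=\sup_{u\in A,\|u\|=1}\operatorname{dist}(u,B)$ ($0$ if $A=\{0\}$), and $\hat\delta(A,B):=\max\{\delta(A,B),\delta(B,A)\}$. *)

(* Defs.v *)
From HB Require Import structures.
From mathcomp Require Import all_boot all_order all_algebra.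
From mathcomp Require Import all_classical all_reals all_analysis.
Set Implicit Arguments. Unset Strict Implicit. Unset Printing Implicit Defensive.
Import Order.TTheory GRing.Theory Num.Theory.
Import numFieldNormedType.Exports.
Local Open Scope classical_set_scope.
Local Open Scope ring_scope.

Section Gap.
Variables (R : realType) (X : normedModType R).

Definition lin_subspace (A : set X) : Prop :=
  A 0 /\ (forall u v, A u -> A v -> A (u + v)) /\ (forall (a : R) u, A u -> A (a *: u)).

Definition span_fam (n : nat) (b : 'I_n -> X) : set X :=
  [set x | exists c : 'I_n -> R, x = \sum_(i < n) c i *: b i].

Definition lin_indep (n : nat) (b : 'I_n -> X) : Prop :=
  forall c : 'I_n -> R, \sum_(i < n) c i *: b i = 0 -> forall i, c i = 0.

Definition has_dim (A : set X) (n : nat) : Prop :=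
  exists b : 'I_n -> X, lin_indep b /\ A = span_fam b.

Definition dist (u : X) (B : set X) : R := inf [set `|u - b| | b in B].

Definition gap (A B : set X) : R :=
  if `[< A = [set 0] >] then 0
  else sup [set dist u B | u in [set u | A u /\ `|u| = 1]].

Definition gap_hat (A B : set X) : R := Num.max (gap A B) (gap B A).

End Gap.

(* Main.v *)
Require Import Defs.
From HB Require Import structures.
From mathcomp Require Import all_boot all_order all_algebra.
From mathcomp Require Import all_classical all_reals all_analysis.
From mathcomp Require Import ring lra.
Import Order.TTheory GRing.Theory Num.Theory.
Import numFieldNormedType.Exports.
Local Open Scope classical_set_scope.
Local Open Scope ring_scope.

Section Aux.
Variables (R : realType) (X : normedModType R).

Lemma dist_le (u w : X) (B : set X) : B w -> dist u B <= `|u - w|.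
Proof.
move=> Bw; rewrite /dist; apply: ge_inf; last by exists w.
by exists 0 => _ [b _ <-].
Qed.

Lemma dist_lt (u : X) (B : set X) t : B !=set0 -> dist u B < t ->
  exists w, B w /\ `|u - w| < t.
Proof.
move=> [w0 Bw0] ht.
have hinf : has_inf [set `|u - b| | b in B].
  by split; [exists `|u - w0|, w0 | exists 0 => _ [b _ <-]].
have e0 : 0 < t - dist u B by rewrite subr_gt0.
have [_ [w Bw <-] hw] := inf_adherent e0 hinf.
by exists w; split => //; move: hw; rewrite /dist addrCA subrr addr0.
Qed.

Lemma gap_le (A B : set X) r : 0 <= r ->
  (forall u, A u -> `|u| = 1 -> dist u B <= r) -> gap A B <= r.
Proof.
move=> r0 H; rewrite /gap; case: ifPn => // _.
set E := [set dist u B | u in _].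
have [[x Ex]|E0] := pselect (E !=set0).
  by apply: ge_sup; [exists x | move=> _ [u [Au nu] <-]; exact: H].
rewrite (_ : E = set0) ?sup0 //; apply/seteqP; split => x // Ex.
by apply: E0; exists x.
Qed.

Lemma dist_le_gap (A B : set X) u : B 0 -> A u -> `|u| = 1 ->
  dist u B <= gap A B.
Proof.
move=> B0 Au nu; rewrite /gap; case: ifPn => [/asboolP HA|_].
  by move: Au nu; rewrite HA => ->; rewrite normr0 => /eqP; rewrite eq_sym oner_eq0.
apply: ub_le_sup; last by exists u.
exists 1 => _ [v [_ nv] <-].
apply: le_trans (@dist_le v 0 B B0) _.
by rewrite subr0 nv.
Qed.

Lemma span_sub n (b : 'I_n -> X) (A : set X) : lin_subspace A ->
  (forall i, A (b i)) -> span_fam b `<=` A.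
Proof.
move=> [A0 [AD AZ]] Hb x [c ->]; elim/big_ind: _ => //.
by move=> i _; apply: AZ.
Qed.

Lemma span_subspace n (b : 'I_n -> X) : lin_subspace (span_fam b).
Proof.
split; first by exists (fun _ => 0); rewrite big1 // => i _; rewrite scale0r.
split.
  move=> u v [c ->] [d ->]; exists (fun i => c i + d i).
  by rewrite -big_split; apply: eq_bigr => i _; rewrite scalerDl.
move=> a u [c ->]; exists (fun i => a * c i).
by rewrite scaler_sumr; apply: eq_bigr => i _; rewrite scalerA.
Qed.

Lemma span_mem n (b : 'I_n -> X) i : span_fam b (b i).
Proof.
exists (fun j => (j == i)%:R); rewrite (bigD1 i) //= eqxx scale1r big1 ?addr0 //.
by move=> j /negbTE ->; rewrite scale0r.
Qed.


Lemma unlift_widen n (j : 'I_n) : unlift ord_max (widen_ord (leqnSn n) j) = Some j.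
Proof.
have -> : widen_ord (leqnSn n) j = lift ord_max j.
  by apply: val_inj; rewrite /= /bump leqNgt ltn_ord.
exact: liftK.
Qed.

Lemma span_recr n (b : 'I_n.+1 -> X) v : span_fam b v <->
  exists w t, span_fam (fun j => b (widen_ord (leqnSn n) j)) w /\
    v = w + t *: b ord_max.
Proof.
split.
  move=> [c ->]; exists (\sum_(j < n) c (widen_ord (leqnSn n) j) *: b (widen_ord (leqnSn n) j)), (c ord_max).
  split; first by exists (fun j => c (widen_ord (leqnSn n) j)).
  by rewrite big_ord_recr.
move=> [w [t [[g ->] ->]]].
exists (fun i => if unlift ord_max i is Some j then g j else t).
rewrite big_ord_recr /= unlift_none; congr (_ + _).
by apply: eq_bigr => j _; rewrite unlift_widen.
Qed.

Lemma riesz n (e : 'I_n -> X) (K : R) : 0 <= K ->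
  (forall c : 'I_n -> R, \sum_i `|c i| <= K * `|\sum_i c i *: e i|) ->
  forall y, exists2 w0, span_fam e w0 &
    (forall w, span_fam e w -> `|y - w0| <= `|y - w|).
Proof.
move=> K0 HK y.
pose r := 2 * K * `|y|.
have r0 : 0 <= r by rewrite /r !mulr_ge0.
pose L (a : 'rV[R]_n) := \sum_i a ord0 i *: e i.
pose g a := `|y - L a|.
pose A := [set a : 'rV[R]_n | forall i, `[- r, r]%classic (a ord0 i)].
have cA : compact A by exact: (@rV_compact _ _ (fun _ => `[- r, r]%classic) (fun _ => @segment_compact R (- r) r)).
have A0 : A 0 by move=> i /=; rewrite mxE in_itv /= oppr_le0 r0.
have cL : continuous L.
  apply: (@continuous_big X _ _ 0 xpredT add_continuous _ _ (fun i (a : 'rV[R]_n) => a ord0 i *: e i)) => i _.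
  move=> a; apply: continuousZr_tmp; exact: coord_continuous.
have cg : continuous g.
  move=> a; apply: (@continuous_comp _ _ _ (fun a => y - L a) (@Num.norm _ X)).
    by apply: continuousB; [exact: cst_continuous | exact: cL].
  exact: norm_continuous.
have [a0 a0A ha0] := compact_EVT_min (ex_intro _ 0 A0) cA (continuous_subspaceT cg).
exists (L a0); first by exists (fun i => a0 ord0 i).
move=> w [c ->].
pose t := \row_i c i : 'rV[R]_n.
have Lt : L t = \sum_i c i *: e i by apply: eq_bigr => i _; rewrite mxE.
have [tA|tA] := pselect (A t).
  by rewrite -Lt; apply: (ha0 t); rewrite inE.
have [i hi] : exists i, r < `|c i|.
  apply: contrapT => hn; apply: tA => i /=; rewrite mxE in_itv /= -ler_norml.
  by rewrite leNgt; apply/negP => h; apply: hn; exists i.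
have hci : `|c i| <= \sum_j `|c j| by rewrite (bigD1 i) //= lerDl sumr_ge0.
have hK := le_trans hci (HK c).
set s := \sum_i c i *: e i in hK *.
have h2 : 2 * `|y| < `|s| by rewrite /r in hi; nra.
have L0 : L 0 = 0 by rewrite /L big1 // => j _; rewrite mxE scale0r.
have := ha0 0; rewrite inE => /(_ A0); rewrite /g L0 subr0 => h0.
apply: le_trans h0 _.
have tri : `|s| <= `|y| + `|y - s|.
  have {1}-> : s = y - (y - s) by rewrite opprB addrCA subrr addr0.
  exact: ler_normB.
lra.
Qed.


Lemma Cstep n : 2 * (2 ^+ n.-1 * n%:R) + 1 <= 2 ^+ n * (n.+1)%:R :> R.
Proof.
case: n => [|m]; first by rewrite /= !mulr0 add0r expr0 mul1r.
rewrite /= exprS.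
have p1 : 1 <= 2 ^+ m :> R by rewrite exprn_ege1 // ler1n.
have m0 : 0 <= m%:R :> R by [].
rewrite -[m.+2]addn2 -[m.+1]addn1 !natrD; set p := 2 ^+ m in p1 *; set q := m%:R in m0 *. nra.
Qed.

Lemma good_basis n (b : 'I_n -> X) : lin_indep b -> exists e : 'I_n -> X,
  [/\ forall i, `|e i| = 1, span_fam e = span_fam b &
    forall c : 'I_n -> R, \sum_i `|c i| <= (2 ^+ n.-1 * n%:R) * `|\sum_i c i *: e i|].
Proof.
elim: n b => [|n IH] b bi.
  exists b; split => //; first by case.
  by move=> c; rewrite big_ord0 mulr0 mul0r.
pose b' := fun j => b (widen_ord (leqnSn n) j).
have bi' : lin_indep b'.
  move=> c hc j.
  have := bi (fun i => if unlift ord_max i is Some k then c k else 0) _ (widen_ord (leqnSn n) j).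
  rewrite unlift_widen; apply.
  rewrite big_ord_recr /= unlift_none scale0r addr0; apply: etrans _ hc.
  by apply: eq_bigr => k _; rewrite unlift_widen.
have [e' [e'1 e'S e'B]] := IH b' bi'.
pose y := b ord_max.
have ny : ~ span_fam e' y.
  rewrite e'S => -[g hg].
  have := bi (fun i => if unlift ord_max i is Some k then g k else -1) _ ord_max.
  rewrite unlift_none => H; suff : (-1 : R) = 0 by apply/eqP; rewrite oppr_eq0 oner_eq0.
  apply: H; rewrite big_ord_recr /= unlift_none scaleN1r.
  rewrite (eq_bigr (fun k => g k *: b' k)) -?hg ?subrr // => k _.
  by rewrite unlift_widen.
have K0 : 0 <= 2 ^+ n.-1 * n%:R :> R by rewrite mulr_ge0 // exprn_ge0.
have [w0 w0S hw0] := @riesz n e' _ K0 e'B y.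
pose d := `|y - w0|.
have d0 : 0 < d.
  rewrite normr_gt0 subr_eq0; apply/negP => /eqP hy; apply: ny; rewrite hy //.
pose x := d^-1 *: (y - w0).
have nx : `|x| = 1.
  by rewrite normrZ ger0_norm ?invr_ge0 ?ltW // mulVf ?gt_eqF.
have sE := @span_subspace n e'.
case: sE => sE0 [sED sEZ].
exists (fun i => if unlift ord_max i is Some j then e' j else x).
have sumE : forall c : 'I_n.+1 -> R,
    \sum_i c i *: (if unlift ord_max i is Some j then e' j else x) =
    \sum_(j < n) c (widen_ord (leqnSn n) j) *: e' j + c ord_max *: x.
  move=> c; rewrite big_ord_recr /= unlift_none; congr (_ + _).
  by apply: eq_bigr => j _; rewrite unlift_widen.
split.
- by move=> i; case: (unlift ord_max i).
- apply/seteqP; split => v.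
  + move=> [c ->]; rewrite sumE; apply/span_recr.
    set u := \sum_(j < n) _.
    have uS : span_fam e' u by exists (fun j => c (widen_ord (leqnSn n) j)).
    exists (u + (- (c ord_max / d)) *: w0), (c ord_max / d); split.
      by rewrite -e'S; apply: sED => //; apply: sEZ.
    rewrite /x scalerA scalerBr scaleNr; rewrite -/y.
    by rewrite -[in RHS]addrA (addrC (- _)).
  + move=> /span_recr [w [t [ws ->]]].
    rewrite -/b' -e'S in ws.
    have : span_fam e' (w + t *: w0) by apply: sED => //; apply: sEZ.
    move=> [h hh].
    exists (fun i => if unlift ord_max i is Some j then h j else t * d).
    rewrite sumE /= unlift_none (eq_bigr (fun j => h j *: e' j)); last by move=> j _; rewrite unlift_widen.
    rewrite -hh /x scalerA mulfK ?gt_eqF // scalerDr scalerN [t *: y + _]addrC addrA addrK.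
    done.
- move=> c; rewrite sumE big_ord_recr /=.
  set uu := \sum_(j < n) c (widen_ord (leqnSn n) j) *: e' j.
  set a := c ord_max.
  have uS : span_fam e' uu by exists (fun j => c (widen_ord (leqnSn n) j)).
  have ha : `|a| <= `|uu + a *: x|.
    have [->|a0] := eqVneq a 0; first by rewrite normr0 normr_ge0.
    have : d <= `|y - (w0 - (d / a) *: uu)|.
      apply: hw0; apply: sED => //; rewrite -scaleN1r scalerA; exact: sEZ.
    have -> : y - (w0 - (d / a) *: uu) = (d / a) *: (uu + a *: x).
      rewrite scalerDr /x !scalerA (_ : d / a * a / d = 1); last first.
        by field; rewrite a0 gt_eqF.
      by rewrite scale1r opprB addrCA.
    rewrite normrZ normf_div (ger0_norm (ltW d0)) mulrAC ler_pdivlMr ?normr_gt0 //.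
    by rewrite ler_pM2l.
  have hu : `|uu| <= 2 * `|uu + a *: x|.
    have {1}-> : uu = (uu + a *: x) - a *: x by rewrite addrK.
    apply: le_trans (ler_normB _ _) _.
    by rewrite normrZ nx mulr1; lra.
  have := e'B (fun j => c (widen_ord (leqnSn n) j)); rewrite -/uu => hs.
  have N0 := normr_ge0 (uu + a *: x).
  have := Cstep n; rewrite /= => hC.
  set N := `|uu + a *: x| in ha hu N0 *.
  set C := 2 ^+ n.-1 * n%:R in K0 hs hC *.
  nra.
Qed.

End Aux.
Arguments dist_le {R X u w B}.
Arguments dist_lt {R X u B t}.
Arguments gap_le {R X A B r}.
Arguments dist_le_gap {R X A B u}.
Arguments span_sub {R X n b A}.
Arguments span_subspace {R X n b}.
Arguments span_mem {R X n b i}.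
Arguments good_basis {R X n b}.

Theorem lemma2p10 (R : realType) (X : completeNormedModType R)
  (N N' V : set X) (n : nat) :
  lin_subspace N -> closed N ->
  lin_subspace N' -> closed N' ->
  lin_subspace V -> V `<=` N -> has_dim V n -> (0 < n)%N ->
  gap N N' < 1 / (2 ^+ n.-1 * n%:R) ->
  forall eps : R, 0 < eps -> eps < 1 / (2 ^+ n.-1 * n%:R) - gap N N' ->
  exists V' : set X,
    [/\ lin_subspace V', V' `<=` N', has_dim V' n &
      gap_hat V V' <=
        (2 ^+ n.-1 * n%:R) * (gap N N' + eps) /
          (1 - (2 ^+ n.-1 * n%:R) * (gap N N' + eps))].
Proof.
move=> sN _ sN' _ sV VN [b [bi Vb]] n0 hgap eps eps0 heps.
have [e [e1 eS eB]] := good_basis bi.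
set del := gap N N' in hgap heps *.
set c := 2 ^+ n.-1 * n%:R in hgap heps eB *.
have c0 : 0 < c by rewrite mulr_gt0 ?exprn_gt0 // ltr0n.
have eV i : V (e i) by rewrite Vb -eS; exact: span_mem.
have N'0 : N' 0 := sN'.1.
have he : forall i, exists w, N' w /\ `|e i - w| < del + eps.
  move=> i; apply: dist_lt; first by exists 0.
  apply: le_lt_trans (dist_le_gap N'0 (VN _ (eV i)) (e1 i)) _.
  by rewrite ltrDl.
have [e' he'] := choice he.
pose th := del + eps.
have i0 : 'I_n := Ordinal n0.
have th0 : 0 <= th.
  by apply: le_trans (ltW (he' i0).2); exact: normr_ge0.
have cth : c * th < 1.
  by move: heps; rewrite ltrBrDl -/th ltr_pdivlMr // mulrC.
have key : forall a : 'I_n -> R,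
    `|\sum_i a i *: e i - \sum_i a i *: e' i| <= c * th * `|\sum_i a i *: e i|.
  move=> a; rewrite -sumrB; apply: le_trans (ler_norm_sum _ _ _) _.
  apply: (@le_trans _ _ (\sum_i `|a i| * th)).
    apply: ler_sum => i _; rewrite -scalerBr normrZ; apply: ler_wpM2l => //.
    exact: ltW (he' i).2.
  rewrite -mulr_suml; have := eB a; nra.
exists (span_fam e'); split.
- exact: span_subspace.
- by apply: span_sub => // i; exact: (he' i).1.
- exists e'; split => //.
  move=> a ha i.
  have := key a; rewrite ha subr0 => hk.
  have nv : `|\sum_i a i *: e i| = 0.
    apply/eqP; rewrite eq_le normr_ge0 andbT.
    set v := `|_| in hk *; nra.
  have := eB a; rewrite nv mulr0 => hs.
  apply/normr0_eq0/eqP; rewrite eq_le normr_ge0 andbT.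
  by apply: le_trans hs; rewrite (bigD1 i) //= lerDl sumr_ge0.
- have B0 : 0 <= c * th / (1 - c * th).
    by apply: divr_ge0; [exact: mulr_ge0 (ltW c0) th0 | rewrite subr_ge0 ltW].
  rewrite /gap_hat ge_max; apply/andP; split; apply: gap_le => // u.
  + rewrite Vb -eS => -[a ->] nu.
    have hw : span_fam e' (\sum_i a i *: e' i) by exists a.
    apply: le_trans (dist_le hw) _.
    apply: le_trans (key a) _; rewrite nu mulr1.
    rewrite ler_pdivlMr ?subr_gt0 //; rewrite -/th; nra.
  + move=> [a ->] nu.
    have vV : V (\sum_i a i *: e i) by rewrite Vb -eS; exists a.
    apply: le_trans (dist_le vV) _.
    rewrite distrC; apply: le_trans (key a) _.
    have tri : `|\sum_i a i *: e i| <= `|\sum_i a i *: e' i| +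
        `|\sum_i a i *: e i - \sum_i a i *: e' i|.
      have {1}-> : \sum_i a i *: e i = \sum_i a i *: e' i +
        (\sum_i a i *: e i - \sum_i a i *: e' i) by rewrite addrC subrK.
      exact: ler_normD.
    have := key a; rewrite nu in tri *.
    set v := `|\sum_i a i *: e i| in tri *.
    set z := `|_ - _| => hk.
    rewrite ler_pdivlMr ?subr_gt0 // -/th.
    have p0 : 0 <= c * th by rewrite mulr_ge0 // ltW.
    move: cth p0 hk; set p := c * th => cth p0 hk; have tri2 : v <= 1 + z := tri; clear tri; clearbody v z p; nra.
Qed.
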